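(* Let $(\Omega,\Sigma,\mu)$ be a measure space with $\mu(\Omega)=1$, let $p\ge 1$, let $\chi\in\mathcal W^+_p$, and let $\{\chi_k\}_{k\in\mathbb N}$ be a sequence of normalized Young weights converging to $\chi$ uniformly on compact subsets of $\mathbb R$. Let $f$ be a bounded $\mu$-measurable function. Then $f\in L^\chi(\mu)$ and $f\in L^{\chi_k}(\mu)$ for all $k$, and $$\lim_{k\to\infty}\|f\|_{\chi_k,\mu}=\|f\|_{\chi,\mu}.$$
   Context: A normalized Young weight is a function $\chi:\mathbb R\to[0,\infty]$ that is convex, even, lower semicontinuous, with $\chi(0)=0$ and $1\in\partial\chi(1)$ (here $\partial\chi(l)$ is the set of subgradients of $\chi$ at $l$). For $p\ge1$, $\mathcal W^+_p$ denotes the set of finite-valued normalized Young weights satisfying $l\,\chi'(l)\le p\,\chi(l)$ for all $l>0$ and every subgradient $\chi'(l)\in\partial\chi(l)$. For a normalized Young weight $\chi$, $L^\chi(\mu)$ is the set of measurable $f:\Omega\to[-\infty,\infty]$ such that $\int_\Omega\chi(rf)\,d\mu<\infty$ for some $r>0$, with the norm $\|f\|_{\chi,\mu}=\inf\{r>0:\int_\Omega\chi(f/r)\,d\mu\le\chi(1)\}$. *)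

(* Defs.v *)
From HB Require Import structures.
From mathcomp Require Import all_boot all_order all_algebra.
From mathcomp Require Import all_classical all_reals all_analysis.
Set Implicit Arguments. Unset Strict Implicit. Unset Printing Implicit Defensive.
Import Order.TTheory GRing.Theory Num.Theory.
Import numFieldNormedType.Exports.
Local Open Scope classical_set_scope.
Local Open Scope ring_scope.
Local Open Scope ereal_scope.

Section Young.
Context {R : realType}.

(* c is a subgradient of the extended-valued function chi at l
   (subdifferential is empty where chi is infinite) *)
Definition subgrad (chi : R -> \bar R) (l c : R) : Prop :=
  chi l \is a fin_num /\ forall y : R, chi l + (c * (y - l))%:E <= chi y.

Definition econvex (chi : R -> \bar R) : Prop :=
  forall (x y t : R), (0 < t < 1)%R ->
    chi (t * x + (1 - t) * y)%R <= t%:E * chi x + (1 - t)%:E * chi y.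

Definition young_weight (chi : R -> \bar R) : Prop :=
  (forall x, 0 <= chi x) /\
  econvex chi /\
  (forall x, chi (- x)%R = chi x) /\
  lower_semicontinuous chi /\
  chi 0%R = 0 /\
  subgrad chi 1 1.

Definition W_plus (p : R) (chi : R -> \bar R) : Prop :=
  [/\ young_weight chi,
      (forall x, chi x \is a fin_num) &
      (forall l c, (0 < l)%R -> subgrad chi l c -> (l * c)%:E <= p%:E * chi l)].

Definition in_Lchi d (T : measurableType d) (mu : {measure set T -> \bar R})
  (chi : R -> \bar R) (f : T -> R) : Prop :=
  exists2 r : R, (0 < r)%R & \int[mu]_x chi (r * f x)%R < +oo.

Definition orlicz_norm d (T : measurableType d) (mu : {measure set T -> \bar R})
  (chi : R -> \bar R) (f : T -> R) : \bar R :=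
  ereal_inf [set r%:E | r in [set r : R | (0 < r)%R /\
                        \int[mu]_x chi (f x / r)%R <= chi 1%R]].

Definition cvg_unif_compact (chik : nat -> R -> \bar R) (chi : R -> \bar R) : Prop :=
  forall K : set R, compact K -> forall e : R, (0 < e)%R ->
    \forall k \near \oo, forall x, K x -> `|chik k x - chi x| < e%:E.

End Young.

(* Main.v *)
Require Import Defs.
From HB Require Import structures.
From mathcomp Require Import all_boot all_order all_algebra.
From mathcomp Require Import all_classical all_reals all_analysis.
From mathcomp Require Import measurable_realfun lra ring.
Import Order.TTheory GRing.Theory Num.Theory.
Import numFieldNormedType.Exports.
Local Open Scope classical_set_scope.
Local Open Scope ring_scope.

Section Helpers.
Context {R : realType}.
Local Open Scope ereal_scope.

Lemma yw_abs {c : R -> \bar R} : young_weight c -> forall z, c `|z|%R = c z.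
Proof.
move=> [_ [_ [ev _]]] z.
have [z0|z0] := leP 0%R z; first by rewrite ger0_norm.
by rewrite ltr0_norm // ev.
Qed.

Lemma yw_mono {c : R -> \bar R} : young_weight c ->
  forall x y, (`|x| <= `|y|)%R -> c x <= c y.
Proof.
move=> yc x y xy.
suff key : forall a b : R, (0 <= a)%R -> (a <= b)%R -> c a <= c b.
  by rewrite -(yw_abs yc x) -(yw_abs yc y); apply: key.
move=> a b a0 ab.
have [c0 [cv [_ [_ [c00 _]]]]] := yc.
have [->|a0'] := eqVneq a 0%R; first by rewrite c00.
have b0' : (0 < b)%R by apply: lt_le_trans ab; rewrite lt0r a0' a0.
have [->|ab'] := eqVneq a b; first by [].
have ab2 : (a < b)%R by rewrite lt_neqAle ab' ab.
have t1 : (a / b < 1)%R.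
  by rewrite ltr_pdivrMr // mul1r.
have t0 : (0 < a / b < 1)%R.
  by rewrite t1 andbT; apply: divr_gt0 => //; rewrite lt0r a0' a0.
have := cv b 0%R _ t0.
rewrite mulr0 addr0 divfK ?gt_eqF // c00 mule0 adde0 => h.
apply: le_trans h _; apply: gee_pMl => //.
by rewrite lee_fin; case/andP: t0 => _ /ltW.
Qed.

Lemma yw_scale {c : R -> \bar R} : young_weight c ->
  forall s x, (0 < s <= 1)%R -> c (s * x)%R <= s%:E * c x.
Proof.
move=> [c0 [cv [_ [_ [c00 _]]]]] s x /andP[s0 s1].
have [->|s1'] := eqVneq s 1%R; first by rewrite mul1r mul1e.
have := cv x 0%R s; rewrite mulr0 addr0 c00 mule0 adde0; apply.
by rewrite s0 /= lt_neqAle s1' s1.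
Qed.


Lemma ebound (a b : \bar R) (e : R) : b \is a fin_num -> `|a - b| < e%:E ->
  a <= b + e%:E /\ b <= a + e%:E.
Proof.
move=> /fineK <-; set b' := fine b.
case: a => [a'| |] //=; rewrite -?EFinB ?lte_fin.
rewrite ltr_norml => /andP[h1 h2]; rewrite -!EFinD !lee_fin; split; lra.
Qed.

Lemma ecomb (x : \bar R) (a b e : R) : a%:E <= x + e%:E -> x <= b%:E -> (a <= b + e)%R.
Proof.
case: x => [x'| |] //=; rewrite -?EFinD !lee_fin; lra.
Qed.

End Helpers.

Section Meas.
Context {R : realType} {d : measure_display} {T : measurableType d} (mu : {measure set T -> \bar R})
  (f : T -> R) (mf : measurable_fun setT f) (mu1 : mu setT = 1%E).
Local Open Scope ereal_scope.

Lemma yw_meas (c : R -> \bar R) : young_weight c -> forall r : R,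
  measurable_fun setT (fun x => c (f x / r)%R).
Proof.
move=> [_ [_ [_ [lsc _]]]] r.
apply: (measurableT_comp (lower_semicontinuous_measurable lsc)).
by apply: measurable_funM => //.
Qed.

Lemma yw_meas' (c : R -> \bar R) : young_weight c -> forall r : R,
  measurable_fun setT (fun x => c (r * f x)%R).
Proof.
move=> [_ [_ [_ [lsc _]]]] r.
apply: (measurableT_comp (lower_semicontinuous_measurable lsc)).
by apply: measurable_funM => //.
Qed.

Lemma int_le_cst (h : T -> \bar R) (a : \bar R) : measurable_fun setT h ->
  (forall x, 0 <= h x) -> (forall x, h x <= a) -> \int[mu]_x h x <= a.
Proof.
move=> mh h0 ha.
apply: (@le_trans _ _ (\int[mu]_x (cst a) x)).
  by apply: ge0_le_integral => //; exact: measurable_cst.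
by rewrite integral_cst // mu1 mule1.
Qed.

Lemma int_le_add (h1 h2 : T -> \bar R) (e : R) : (0 <= e)%R ->
  measurable_fun setT h1 -> measurable_fun setT h2 ->
  (forall x, 0 <= h1 x) -> (forall x, 0 <= h2 x) ->
  (forall x, h1 x <= h2 x + e%:E) ->
  \int[mu]_x h1 x <= \int[mu]_x h2 x + e%:E.
Proof.
move=> e0 m1 m2 p1 p2 h12.
apply: (@le_trans _ _ (\int[mu]_x (h2 x + (cst e%:E) x))).
  apply: ge0_le_integral => //.
  by apply: emeasurable_funD => //; exact: measurable_cst.
by rewrite ge0_integralD // integral_cst // mu1 mule1.
Qed.

Lemma norm_ub (c : R -> \bar R) (r : R) : (0 < r)%R ->
  \int[mu]_x c (f x / r)%R <= c 1%R -> orlicz_norm mu c f <= r%:E.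
Proof. by move=> r0 h; apply: ereal_inf_lbound; exists r. Qed.

Lemma norm_lb (c : R -> \bar R) (a : R) :
  (forall r : R, (0 < r)%R -> \int[mu]_x c (f x / r)%R <= c 1%R -> (a <= r)%R) ->
  a%:E <= orlicz_norm mu c f.
Proof.
by move=> h; apply/ereal_infP => _ [r [r0 hr] <-]; rewrite lee_fin; exact: h.
Qed.

Lemma norm_lt (c : R -> \bar R) (r : R) : orlicz_norm mu c f < r%:E ->
  exists r' : R, [/\ (0 < r')%R, \int[mu]_x c (f x / r')%R <= c 1%R & (r' < r)%R].
Proof.
by move/ereal_inf_lt => [_ [r' [r0 h] <-]]; rewrite lte_fin => lt; exists r'.
Qed.

End Meas.

Lemma eshift {R : realType} (x : \bar R) (a e : R) :
  (a%:E <= x + e%:E)%E -> ((a - e)%:E <= x)%E.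
Proof.
case: x => [x'| |] h.
- by move: h; rewrite -EFinD !lee_fin; lra.
- by rewrite leey.
- by move: h; rewrite /= leeNy_eq.
Qed.

Theorem proposition1p6 (R : realType) (d : measure_display) (T : measurableType d)
  (mu : {measure set T -> \bar R}) (p : R) (chi : R -> \bar R)
  (chik : nat -> R -> \bar R) (f : T -> R) :
  mu setT = 1%E ->
  1 <= p ->
  W_plus p chi ->
  (forall k, young_weight (chik k)) ->
  cvg_unif_compact chik chi ->
  measurable_fun setT f ->
  (exists M : R, forall x, `|f x| <= M) ->
  [/\ in_Lchi mu chi f,
      (forall k, in_Lchi mu (chik k) f) &
      (fun k => orlicz_norm mu (chik k) f) @ \oo --> orlicz_norm mu chi f].
Proof.
move=> mu1 p1 [ychi chifin Wp] yk Hu mf [M hM].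
set M0 := (`|M| + 1)%R.
have M00 : (0 < M0)%R by rewrite /M0; have := normr_ge0 M; lra.
have hf : forall x, (`|f x| <= M0)%R.
  by move=> x; have := hM x; have := ler_norm M; rewrite /M0; lra.
have yc0 : forall c : R -> \bar R, young_weight c -> forall x : R, (0 <= c x)%E.
  move=> c yc x; case: yc => h _; exact: h.
have Lin : forall c : R -> \bar R, young_weight c -> in_Lchi mu c f.
  move=> c yc; exists M0^-1; first by rewrite invr_gt0.
  have [_ [_ [_ [_ [_ [fin _]]]]]] := yc.
  apply: (@le_lt_trans _ _ (c 1)).
    apply: (int_le_cst mu mu1 _ _ (yw_meas' f mf _ yc _) (fun x => yc0 c yc _)) => x.
    apply: (yw_mono yc); rewrite normr1 normrM gtr0_norm ?invr_gt0 //.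
    by rewrite ler_pdivrMl // mulr1.
  by move: fin; rewrite fin_numElt => /andP[].
have Nb : forall c : R -> \bar R, young_weight c ->
    (0 <= orlicz_norm mu c f)%E /\ (orlicz_norm mu c f <= M0%:E)%E.
  move=> c yc; split.
    by apply: (norm_lb mu f c 0) => r r0 _; exact: ltW.
  apply: (norm_ub mu f c _ M00).
  apply: (int_le_cst mu mu1 _ _ (yw_meas f mf _ yc _) (fun x => yc0 c yc _)) => x.
  apply: (yw_mono yc); rewrite normr1 normrM normfV (gtr0_norm M00).
  by rewrite ler_pdivrMr // mul1r.
have Nfin : forall c : R -> \bar R, young_weight c -> orlicz_norm mu c f \is a fin_num.
  move=> c yc; have [h1 h2] := Nb c yc; rewrite fin_numElt.
  by rewrite (lt_le_trans (ltNyr 0%R) h1) (le_lt_trans h2 (ltry _)).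
split; [exact: Lin | by move=> k; exact: Lin | ].
have [_ [_ [_ [_ [_ sg1]]]]] := ychi.
have chi1E : chi 1%R = (fine (chi 1%R))%:E by rewrite fineK //; case: sg1.
set c1 := fine (chi 1%R).
have chi1E' : chi 1%R = c1%:E by exact: chi1E.
have c10 : (0 < c1)%R.
  have := Wp 1%R 1%R ltr01 sg1; rewrite chi1E' -EFinM lee_fin mulr1.
  move=> h; rewrite ltNge; apply/negP => hc.
  have : (p * c1 <= 0)%R by rewrite mulr_ge0_le0 //; lra.
  by rewrite -/c1 in h; lra.
have NchiE : orlicz_norm mu chi f = (fine (orlicz_norm mu chi f))%:E.
  by rewrite fineK // Nfin.
set n := fine (orlicz_norm mu chi f).
have NchiE' : orlicz_norm mu chi f = n%:E by exact: NchiE.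
have n0 : (0 <= n)%R by have [+ _] := Nb chi ychi; rewrite NchiE' lee_fin.
rewrite NchiE'; apply: cvg_EFin; first by apply: nearW => k; exact: Nfin.
apply/cvgrPdist_le => e e0.
have fKg : forall r : R, (0 < r)%R -> forall x, (`|f x / r| <= M0 / r + 1)%R.
  move=> r r0 x; rewrite normrM normfV (gtr0_norm r0).
  have h : (`|f x| / r <= M0 / r)%R by rewrite ler_pM2r ?invr_gt0 // hf.
  by apply: (le_trans h); rewrite lerDl.
have K1g : forall r : R, (0 < r)%R -> (`|1| <= M0 / r + 1)%R.
  by move=> r r0; rewrite normr1 lerDr divr_ge0 // ltW.
have inK : forall B x : R, (`|x| <= B)%R -> `[-B, B]%classic x.
  by move=> B x; rewrite /= in_itv /= -ler_norml.
have Hup : \forall k \near \oo, (orlicz_norm mu (chik k) f <= (n + e)%:E)%E.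
  set r := (n + e)%R.
  have r0 : (0 < r)%R by rewrite /r; lra.
  have : (orlicz_norm mu chi f < r%:E)%E.
    rewrite NchiE' lte_fin /r; lra.
  move/(norm_lt mu f chi r) => [r' [r'0 Fr' r'r]].
  set s := (r' / r)%R.
  have s0 : (0 < s)%R by rewrite divr_gt0.
  have s1 : (s < 1)%R by rewrite /s ltr_pdivrMr // mul1r.
  have Fr : (\int[mu]_x chi (f x / r)%R <= (s * c1)%:E)%E.
    have Hs : (\int[mu]_x chi (f x / r)%R <= \int[mu]_x (s%:E * chi (f x / r')%R))%E.
      apply: ge0_le_integral => //.
      - by move=> x _; apply: (yc0 _ ychi).
      - exact: (yw_meas f mf _ ychi r).
      - apply: measurable_funeM; exact: (yw_meas f mf _ ychi r').
      - move=> x _.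
        have -> : (f x / r = s * (f x / r'))%R.
          by rewrite /s; field; rewrite ?gt_eqF.
        by apply: (yw_scale ychi); rewrite s0 ltW.
    apply: (le_trans Hs).
    rewrite ge0_integralZl_EFin //; first last.
    - exact: ltW.
    - exact: (yw_meas f mf _ ychi r').
    - by move=> x _; apply: (yc0 _ ychi).
    rewrite (_ : (s * c1)%:E = s%:E * chi 1%R)%E; last by rewrite chi1E'.
    apply: lee_wpmul2l => //.
    by rewrite lee_fin ltW.
  set q := ((1 - s) * c1)%R.
  have q0 : (0 < q)%R by rewrite mulr_gt0 // subr_gt0.
  have sq : (s * c1 = c1 - q)%R by rewrite /q; ring.
  set δ := (q / 3)%R.
  have δ0 : (0 < δ)%R by rewrite divr_gt0.
  have HK := Hu _ (@segment_compact R (- (M0 / r + 1)) (M0 / r + 1)) δ δ0.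
  apply: filterS HK => k Hk.
  apply: (norm_ub mu f _ _ r0).
  have e1 := ebound _ _ _ (chifin 1%R) (Hk _ (inK _ _ (K1g r r0))).
  have h1 : (\int[mu]_x chik k (f x / r)%R <= \int[mu]_x chi (f x / r)%R + δ%:E)%E.
    apply: (int_le_add mu mu1) => //; first exact: ltW.
    - exact: (yw_meas f mf _ (yk k) r).
    - exact: (yw_meas f mf _ ychi r).
    - by move=> x; apply: (yc0 _ (yk k)).
    - by move=> x; apply: (yc0 _ ychi).
    - by move=> x; have [] := ebound _ _ _ (chifin _) (Hk _ (inK _ _ (fKg r r0 x))).
  apply: (le_trans h1).
  apply: (@le_trans _ _ ((c1 - δ)%:E)); last first.
    by apply: eshift; rewrite -chi1E'; exact: e1.2.
  apply: (@le_trans _ _ ((s * c1)%:E + δ%:E)); first exact: leeD2r.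
  by rewrite -EFinD lee_fin sq /δ; lra.
have Hlo : \forall k \near \oo, ((n - e)%:E <= orlicz_norm mu (chik k) f)%E.
  have [hne|hne] := leP (n - e) 0%R.
    apply: nearW => k; apply: (@le_trans _ _ 0%E); first by rewrite lee_fin.
    by have [] := Nb _ (yk k).
  set r := (n - e)%R.
  have r0 : (0 < r)%R by [].
  have Fbig : (chi 1%R < \int[mu]_x chi (f x / r)%R)%E.
    rewrite ltNge; apply/negP => H.
    have := norm_ub mu f chi r r0 H; rewrite NchiE' lee_fin /r; lra.
  have Ffin : (\int[mu]_x chi (f x / r)%R)%E \is a fin_num.
    rewrite ge0_fin_numE; last by apply: integral_ge0 => x _; apply: (yc0 _ ychi).
    apply: (@le_lt_trans _ _ (chi (M0 / r)%R)).
      apply: (int_le_cst mu mu1 _ _ (yw_meas f mf _ ychi _) (fun x => yc0 _ ychi _)) => x.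
      apply: (yw_mono ychi); rewrite normrM normfV (gtr0_norm r0).
      rewrite (ger0_norm (divr_ge0 (ltW M00) (ltW r0))).
      by rewrite ler_pM2r ?invr_gt0 // hf.
    by move: (chifin (M0 / r)%R); rewrite fin_numElt => /andP[].
  have FrE := fineK Ffin.
  set Fr := fine (\int[mu]_x chi (f x / r)%R)%E in FrE.
  have c1Fr : (c1 < Fr)%R by move: Fbig; rewrite -FrE chi1E' lte_fin.
  set δ := ((Fr - c1) / 3)%R.
  have δ0 : (0 < δ)%R by rewrite divr_gt0 // subr_gt0.
  have HK := Hu _ (@segment_compact R (- (M0 / r + 1)) (M0 / r + 1)) δ δ0.
  apply: filterS HK => k Hk.
  apply: (norm_lb mu f) => r'' r''0 Hr''.
  rewrite leNgt; apply/negP => r''r.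
  have mono : (\int[mu]_x chik k (f x / r)%R <= \int[mu]_x chik k (f x / r'')%R)%E.
    apply: ge0_le_integral => //.
    - by move=> x _; apply: (yc0 _ (yk k)).
    - exact: (yw_meas f mf _ (yk k) r).
    - exact: (yw_meas f mf _ (yk k) r'').
    - move=> x _; apply: (yw_mono (yk k)); rewrite !normrM.
      apply: ler_wpM2l => //; rewrite !normfV (gtr0_norm r0) (gtr0_norm r''0).
      by rewrite lef_pV2 ?posrE // ltW.
  have lo : (Fr%:E <= \int[mu]_x chik k (f x / r)%R + δ%:E)%E.
    rewrite FrE; apply: (int_le_add mu mu1) => //; first exact: ltW.
    - exact: (yw_meas f mf _ ychi r).
    - exact: (yw_meas f mf _ (yk k) r).
    - by move=> x; apply: (yc0 _ ychi).
    - by move=> x; apply: (yc0 _ (yk k)).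
    - by move=> x; have [] := ebound _ _ _ (chifin _) (Hk _ (inK _ _ (fKg r r0 x))).
  have up : (chik k 1%R <= (c1 + δ)%:E)%E.
    by rewrite EFinD -chi1E'; have [] := ebound _ _ _ (chifin 1%R) (Hk _ (inK _ _ (K1g r r0))).
  have := ecomb _ _ _ _ lo (le_trans mono (le_trans Hr'' up)).
  by rewrite /δ; lra.
apply: filterS2 Hup Hlo => k h1 h2 /=.
rewrite -(fineK (Nfin _ (yk k))) in h1 h2.
rewrite lee_fin in h1; rewrite lee_fin in h2.
rewrite -/n ler_distl; apply/andP; split; lra.
Qed.
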